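(* Let $(M,g)$ be a four-dimensional oriented smooth Lorentzian manifold with Levi-Civita connection $\nabla$ and a smooth vector field $\tau^\mu$ with $\tau^\mu\tau_\mu=1$. Let $K^\nu$ be a smooth vector field with values in $\mathrm{Herm}(2)$ such that $K^\mu\tilde K^\nu+K^\nu\tilde K^\mu=2g^{\mu\nu}e$, $\nabla_\mu\pi_+(K^\mu)=0$ and $\pi_+(K^\nu)=\tau^\nu e$; set $L^\nu:=\pi_-(K^\nu)$. Let $C_\lambda$ be a smooth covector field with values in $\mathfrak{su}(2)$, and let $\varkappa_{\lambda\mu}{}^{\nu}$ be a smooth real tensor field with $\varkappa_{\lambda\mu}{}^{\lambda}=0$ and $\varkappa_{\lambda\mu\nu}=-\varkappa_{\lambda\nu\mu}$. If $$\nabla_\lambda L^\nu-[C_\lambda,L^\nu]=\varkappa_{\lambda\mu}{}^{\nu}L^\mu\quad\text{for all }\lambda,\nu,$$ then $$C_\lambda=-\tfrac14\big((\nabla_\lambda L^\nu)L_\nu-\varkappa_{\lambda\mu\nu}L^\mu L^\nu\big).$$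
   Context: Greek indices are raised/lowered with $g$ and repeated indices are summed. $e$ is the $2\times2$ identity matrix; $\mathrm{Herm}(2)$ is the set of Hermitian $2\times2$ matrices; $\mathfrak{su}(2)$ is the set of traceless anti-Hermitian $2\times2$ matrices. For $A\in\mathrm{Mat}(2,\mathbb{C})$: $\pi_+(A)=\tfrac12(\operatorname{tr}A)e$, $\pi_-(A)=A-\pi_+(A)$, $\tilde A=\pi_+(A)-\pi_-(A)$. Products of matrix-valued tensor fields are matrix products of their components; the covariant derivative of a matrix-valued tensor field $V=v_a\sigma^a$ (Pauli basis $\sigma^0=e,\sigma^1,\sigma^2,\sigma^3$, complex tensor fields $v_a$) is $(\nabla v_a)\sigma^a$. *)

(* Defs.v *)
(* Local-coordinate (chart) formalization
   of the geometric setting: the manifold is modelled by an open set U of R^4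
   (points are row vectors 'rV[R]_4), tensors are given by their coordinate
   components, and the Levi-Civita connection by its Christoffel symbols. *)
From HB Require Import structures.
From mathcomp Require Import all_boot all_order all_algebra.
From mathcomp Require Import all_classical all_reals all_analysis.
From mathcomp.real_closed Require Import complex.

Set Implicit Arguments.
Unset Strict Implicit.
Unset Printing Implicit Defensive.

Import numFieldNormedType.Exports.
Import Order.TTheory GRing.Theory Num.Theory.
Local Open Scope ring_scope.
Local Open Scope classical_set_scope.

Notation pt R := 'rV[R]_4.

Section Defs.
Variable R : realType.
Local Notation pt := 'rV[R]_4.
Definition cbasis (i : 'I_4) : pt := delta_mx 0 i.

Definition cR (r : R) : R[i] := Complex r 0.

Definition pd (i : 'I_4) (f : pt -> R) : pt -> R := fun x => 'D_(cbasis i) f x.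

Fixpoint Ck_on (U : set pt) (k : nat) (f : pt -> R) : Prop :=
  match k with
  | 0 => forall x, U x -> {for x, continuous f}
  | k'.+1 => (forall x, U x -> differentiable f x) /\
             (forall i, Ck_on U k' (pd i f))
  end.

Definition smooth_on (U : set pt) (f : pt -> R) := forall k, Ck_on U k f.

Definition smoothC_on (U : set pt) (f : pt -> R[i]) :=
  smooth_on U (fun x => complex.Re (f x)) /\ smooth_on U (fun x => complex.Im (f x)).

Definition pdC (i : 'I_4) (f : pt -> R[i]) : pt -> R[i] := fun x =>
  Complex (pd i (fun y => complex.Re (f y)) x) (pd i (fun y => complex.Im (f y)) x).

Definition smoothM_on (U : set pt) (F : pt -> 'M[R[i]]_2) :=
  forall j k, smoothC_on U (fun x => F x j k).

Definition pauli (a : 'I_4) : 'M[R[i]]_2 :=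
  \matrix_(r < 2, c < 2)
    match nat_of_ord a with
    | 0 => if r == c then 1 else 0
    | 1 => if r == c then 0 else 1
    | 2 => if r == c then 0 else (if nat_of_ord r == 0 then - 'i else 'i)
    | _ => if r == c then (if nat_of_ord r == 0 then 1 else -1) else 0
    end.

(* component v_a of A = v_a sigma^a  (tr(sigma^a sigma^b) = 2 delta_ab) *)
Definition pauli_coef (a : 'I_4) (A : 'M[R[i]]_2) : R[i] :=
  (2%:R)^-1 * \tr (pauli a *m A).

Definition pip (A : 'M[R[i]]_2) : 'M[R[i]]_2 := ((2%:R)^-1 * \tr A)%:M.
Definition pim (A : 'M[R[i]]_2) : 'M[R[i]]_2 := A - pip A.
Definition tildeM (A : 'M[R[i]]_2) : 'M[R[i]]_2 := pip A - pim A.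

Definition adjM (A : 'M[R[i]]_2) : 'M[R[i]]_2 := (map_mx (@conjc R) A)^T.
Definition herm2 (A : 'M[R[i]]_2) := adjM A = A.
Definition su2_mat (A : 'M[R[i]]_2) := adjM A = - A /\ \tr A = 0.

Definition ginv (g : pt -> 'M[R]_4) (x : pt) : 'M[R]_4 := invmx (g x).

Definition minkowski : 'M[R]_4 :=
  diag_mx (\row_(i < 4) if i == 0 then 1 else -1).

Definition lorentzian_on (U : set pt) (g : pt -> 'M[R]_4) :=
  (forall m n, smooth_on U (fun x => g x m n)) /\
  forall x, U x -> (g x)^T = g x /\
    exists P : 'M[R]_4, P \in unitmx /\
      (P^T *m g x *m P = minkowski \/ P^T *m g x *m P = - minkowski).

Definition christoffel (g : pt -> 'M[R]_4) (x : pt) (nu lam mu : 'I_4) : R :=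
  (2%:R)^-1 * \sum_(rho < 4) ginv g x nu rho *
     (pd lam (fun y => g y rho mu) x + pd mu (fun y => g y rho lam) x
      - pd rho (fun y => g y lam mu) x).

Definition covC (g : pt -> 'M[R]_4) (v : pt -> 'I_4 -> R[i]) (x : pt)
    (lam nu : 'I_4) : R[i] :=
  pdC lam (fun y => v y nu) x + \sum_(mu < 4) cR (christoffel g x nu lam mu) * v x mu.

Definition covM (g : pt -> 'M[R]_4) (V : pt -> 'I_4 -> 'M[R[i]]_2) (x : pt)
    (lam nu : 'I_4) : 'M[R[i]]_2 :=
  \sum_(a < 4) covC g (fun y mu => pauli_coef a (V y mu)) x lam nu *: pauli a.

Definition divM (g : pt -> 'M[R]_4) (V : pt -> 'I_4 -> 'M[R[i]]_2) (x : pt) :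
  'M[R[i]]_2 := \sum_(mu < 4) covM g V x mu mu.

End Defs.

(* Main.v *)
Require Import Defs.
From HB Require Import structures.
From mathcomp Require Import all_boot all_order all_algebra.
From mathcomp Require Import all_classical all_reals all_analysis.
From mathcomp.real_closed Require Import complex.
From mathcomp Require Import ring lra.
Import numFieldNormedType.Exports.
Import Order.TTheory GRing.Theory Num.Theory.
Local Open Scope ring_scope.

Section Alg.
Variable R : realType.
Implicit Types (x y : R[i]).

Lemma Ceq x y : complex.Re x = complex.Re y -> complex.Im x = complex.Im y -> x = y.
Proof. by case: x y => a b [c d] /= -> ->. Qed.
Lemma ReD x y : complex.Re (x + y) = complex.Re x + complex.Re y. Proof. by case: x y => a b [c d]. Qed.
Lemma ImD x y : complex.Im (x + y) = complex.Im x + complex.Im y. Proof. by case: x y => a b [c d]. Qed.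
Lemma ReN x : complex.Re (- x) = - complex.Re x. Proof. by case: x. Qed.
Lemma ImN x : complex.Im (- x) = - complex.Im x. Proof. by case: x. Qed.
Lemma ReM x y : complex.Re (x * y) = complex.Re x * complex.Re y - complex.Im x * complex.Im y. Proof. by case: x y => a b [c d]. Qed.
Lemma ImM x y : complex.Im (x * y) = complex.Re x * complex.Im y + complex.Im x * complex.Re y. Proof. by case: x y => a b [c d]. Qed.
Lemma ReC (a b : R) : complex.Re (Complex a b) = a. Proof. by []. Qed.
Lemma ImC (a b : R) : complex.Im (Complex a b) = b. Proof. by []. Qed.
Lemma Re0 : complex.Re (0 : R[i]) = 0. Proof. by []. Qed.
Lemma Im0 : complex.Im (0 : R[i]) = 0. Proof. by []. Qed.
Lemma Re1 : complex.Re (1 : R[i]) = 1. Proof. by []. Qed.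
Lemma Im1 : complex.Im (1 : R[i]) = 0. Proof. by []. Qed.
Lemma ReJ x : complex.Re (conjc x) = complex.Re x. Proof. by case: x. Qed.
Lemma ImJ x : complex.Im (conjc x) = - complex.Im x. Proof. by case: x. Qed.
Lemma cRE (r : R) : cR r = (r%:C)%C. Proof. by []. Qed.

Definition mk2 (a b c d : R[i]) : 'M[R[i]]_2 :=
  \matrix_(i < 2, j < 2) if nat_of_ord i == 0%N then (if nat_of_ord j == 0%N then a else b)
                         else (if nat_of_ord j == 0%N then c else d).

Lemma mk2E (A : 'M[R[i]]_2) : A = mk2 (A 0 0) (A 0 1) (A 1 0) (A 1 1).
Proof.
apply/matrixP => i j; rewrite mxE.
by case: i j => [[|[|//]] ?] [[|[|//]] ?] /=; congr (A _ _); apply: val_inj.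
Qed.

Lemma mul2 a b c d a' b' c' d' : mk2 a b c d *m mk2 a' b' c' d' =
  mk2 (a*a'+b*c') (a*b'+b*d') (c*a'+d*c') (c*b'+d*d').
Proof.
apply/matrixP => i j; rewrite !mxE !big_ord_recr big_ord0 /= !mxE add0r.
by case: i j => [[|[|//]] ?] [[|[|//]] ?].
Qed.
Lemma add2 a b c d a' b' c' d' : mk2 a b c d + mk2 a' b' c' d' = mk2 (a+a') (b+b') (c+c') (d+d').
Proof. by apply/matrixP => i j; rewrite !mxE; case: i j => [[|[|//]] ?] [[|[|//]] ?]. Qed.
Lemma opp2 a b c d : - mk2 a b c d = mk2 (-a) (-b) (-c) (-d).
Proof. by apply/matrixP => i j; rewrite !mxE; case: i j => [[|[|//]] ?] [[|[|//]] ?]. Qed.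
Lemma scale2 k a b c d : k *: mk2 a b c d = mk2 (k*a) (k*b) (k*c) (k*d).
Proof. by apply/matrixP => i j; rewrite !mxE; case: i j => [[|[|//]] ?] [[|[|//]] ?]. Qed.
Lemma scal2 k : k%:M = mk2 k 0 0 k :> 'M[R[i]]_2.
Proof. by apply/matrixP => i j; rewrite !mxE; case: i j => [[|[|//]] ?] [[|[|//]] ?]. Qed.
Lemma tr2 a b c d : \tr (mk2 a b c d) = a + d.
Proof. by rewrite /mxtrace !big_ord_recr big_ord0 /= !mxE add0r. Qed.
Lemma eq2 a b c d a' b' c' d' : a = a' -> b = b' -> c = c' -> d = d' -> mk2 a b c d = mk2 a' b' c' d'.
Proof. by move=> -> -> -> ->. Qed.
Definition o0 : 'I_3 := @Ordinal 3 0 isT.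
Definition o1 : 'I_3 := @Ordinal 3 1 isT.
Definition o2 : 'I_3 := @Ordinal 3 2 isT.

Lemma sum3 (V : zmodType) (F : 'I_3 -> V) : \sum_a F a = F o0 + F o1 + F o2.
Proof.
rewrite !big_ord_recr big_ord0 /= add0r.
by congr (F _ + F _ + F _); apply: val_inj.
Qed.

Definition Hm (v0 v1 v2 : R) := mk2 (cR v2) (Complex v0 (-v1)) (Complex v0 v1) (cR (-v2)).
Definition H (v : 'I_3 -> R) := Hm (v o0) (v o1) (v o2).
Definition s (a : 'I_3) := H (fun b => (a == b)%:R).

Lemma s0 : s o0 = Hm 1 0 0. Proof. by []. Qed.
Lemma s1 : s o1 = Hm 0 1 0. Proof. by []. Qed.
Lemma s2 : s o2 = Hm 0 0 1. Proof. by []. Qed.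

Ltac csolve := apply: Ceq; rewrite ?(ReD,ImD,ReN,ImN,ReM,ImM,ReC,ImC,Re0,Im0,Re1,Im1,ReJ,ImJ) /=; ring.

Lemma anticomm v w : H v *m H w + H w *m H v = (cR (2 * (v o0 * w o0 + v o1 * w o1 + v o2 * w o2)))%:M.
Proof.
rewrite /H /Hm !mul2 add2 scal2 /cR; apply: eq2; csolve.
Qed.

Lemma Hdec v : H v = \sum_a cR (v a) *: s a.
Proof.
rewrite sum3 s0 s1 s2 /H /Hm !scale2 !add2 /cR; apply: eq2; csolve.
Qed.

Lemma sXs (X : 'M[R[i]]_2) : \tr X = 0 -> \sum_a s a *m X *m s a = - X.
Proof.
rewrite [X]mk2E tr2 sum3 s0 s1 s2 /Hm !mul2 !add2 opp2 => h.
have h' : X 1 1 = - X 0 0 by apply/eqP; rewrite -addr_eq0 addrC h.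
rewrite h' /cR; apply: eq2; csolve.
Qed.

Lemma sq_mx_eq0 m n (A : 'M[R]_(m, n)) : \tr (A *m A^T) = 0 -> A = 0.
Proof.
move=> h; have e : \tr (A *m A^T) = \sum_i \sum_j A i j ^+ 2.
  by rewrite /mxtrace; apply: eq_bigr => i _; rewrite !mxE; apply: eq_bigr => j _; rewrite !mxE expr2.
have h1 := h; rewrite e in h1.
have hi : forall i, \sum_j A i j ^+ 2 = 0.
  move=> i; apply: (psumr_eq0P _ h1) => // k _; apply: sumr_ge0 => j _; exact: sqr_ge0.
apply/matrixP => i j; rewrite mxE; apply/eqP; rewrite -sqrf_eq0; apply/eqP.
by apply: (psumr_eq0P _ (hi i)) => // k _; exact: sqr_ge0.
Qed.

Lemma trB n (A B : 'M[R]_n) : \tr (A - B) = \tr A - \tr B.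
Proof. by rewrite /mxtrace -sumrB; apply: eq_bigr => i _; rewrite !mxE. Qed.
Lemma trN n (A : 'M[R]_n) : \tr (- A) = - \tr A.
Proof. by rewrite /mxtrace -sumrN; apply: eq_bigr => i _; rewrite !mxE. Qed.

Lemma real_part (G Gi : 'M[R]_4) (t : 'cV[R]_4) (l : 'M[R]_(4,3)) :
  G^T = G -> G *m Gi = 1%:M -> t^T *m G *m t = 1%:M -> l *m l^T = t *m t^T - Gi ->
  l^T *m G *m l = - 1%:M.
Proof.
move=> hG hGi ht hl.
set u := l^T *m G *m t.
have hut : u^T = t^T *m G *m l by rewrite /u !trmx_mul trmxK hG mulmxA.
have hu : u = 0.
  apply: sq_mx_eq0; rewrite mxtrace_mulC hut.
  have -> : t^T *m G *m l *m u = t^T *m G *m (l *m l^T) *m G *m t by rewrite /u !mulmxA.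
  rewrite hl mulmxBr mulmxBl !mulmxA.
  rewrite -(mulmxA _ G Gi) hGi mulmx1 ht.
  by rewrite mul1mx subrr mul0mx mxtrace0.
set M := l^T *m G *m l.
have hMM : M *m M = - M.
  have -> : M *m M = l^T *m G *m (l *m l^T) *m G *m l by rewrite /M !mulmxA.
  rewrite hl mulmxBr mulmxBl -(mulmxA _ G Gi) hGi mulmx1.
  rewrite mulmxBl (_ : l^T *m G *m (t *m t^T) *m G *m l = u *m u^T); last by rewrite hut /u !mulmxA.
  by rewrite hu mul0mx sub0r.
have htr : \tr M = - 3%:R.
  have hGi' : Gi *m G = 1%:M by apply: mulmx1C.
  rewrite /M mxtrace_mulC mulmxA hl mulmxBl trB hGi'.
  rewrite -mulmxA mxtrace_mulC ht !mxtrace1.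
  ring.
have hMT : M^T = M by rewrite /M !trmx_mul trmxK hG mulmxA.
set N := M + 1%:M.
have hN : N = 0.
  apply: sq_mx_eq0.
  have -> : N^T = N by rewrite /N linearD /= hMT trmx1.
  rewrite /N mulmxDl !mulmxDr hMM mulmx1 mul1mx.
  rewrite mul1mx !mxtraceD trN htr mxtrace1.
  ring.
by apply/eqP; rewrite -addr_eq0; apply/eqP.
Qed.

Lemma bil (c d : 'I_3 -> R[i]) X : (\sum_a c a *: s a) *m X *m (\sum_b d b *: s b) =
  \sum_a \sum_b (c a * d b) *: (s a *m X *m s b).
Proof.
rewrite !mulmx_suml; apply: eq_bigr => a _.
rewrite -!scalemxAl mulmx_sumr scaler_sumr; apply: eq_bigr => b _.
by rewrite -scalemxAr scalerA.
Qed.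

Lemma Ecomp (G : 'M[R]_4) (l : 'M[R]_(4,3)) (L : 'I_4 -> 'M[R[i]]_2) X :
 (forall n, L n = H (fun a => l n a)) -> l^T *m G *m l = -1%:M ->
 \sum_n L n *m X *m (\sum_r cR (G n r) *: L r) = - \sum_a s a *m X *m s a.
Proof.
move=> hL hM.
have hMe : forall a b, \sum_n \sum_r l n a * G n r * l r b = - (a == b)%:R.
  move=> a b; have := congr1 (fun A : 'M[R]_3 => A a b) hM; rewrite !mxE => <-.
  rewrite exchange_big /=; apply: eq_bigr => r _; rewrite !mxE big_distrl /=.
  by apply: eq_bigr => n _; rewrite !mxE.
transitivity (\sum_a \sum_b (\sum_n \sum_r cR (l n a * G n r * l r b)) *: (s a *m X *m s b)).
  transitivity (\sum_n \sum_r \sum_a \sum_b cR (l n a * G n r * l r b) *: (s a *m X *m s b)).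
    apply: eq_bigr => n _; rewrite mulmx_sumr; apply: eq_bigr => r _.
    rewrite -scalemxAr !hL !Hdec bil scaler_sumr; apply: eq_bigr => a _.
    rewrite scaler_sumr; apply: eq_bigr => b _; rewrite scalerA !cRE !rmorphM /=.
    by congr (_ *: _); ring.
  symmetry.
  transitivity (\sum_a \sum_b \sum_n \sum_r cR (l n a * G n r * l r b) *: (s a *m X *m s b)).
    apply: eq_bigr => a _; apply: eq_bigr => b _; rewrite scaler_suml; apply: eq_bigr => n _.
    by rewrite scaler_suml.
  under eq_bigr => a _ do rewrite exchange_big.
  under eq_bigr => a _ do under eq_bigr => n _ do rewrite exchange_big.
  rewrite exchange_big.
  by under eq_bigr => n _ do rewrite exchange_big.
transitivity (\sum_a \sum_b cR (- (a == b)%:R) *: (s a *m X *m s b)).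
  apply: eq_bigr => a _; apply: eq_bigr => b _; congr (_ *: _).
  rewrite -hMe !cRE rmorph_sum; apply: eq_bigr => n _; by rewrite rmorph_sum.
rewrite -sumrN; apply: eq_bigr => a _.
rewrite (bigD1 a) //= eqxx big1 ?addr0.
  by rewrite cRE rmorphN /= mulr1n rmorph1 scaleN1r.
move=> b hb; rewrite eq_sym (negbTE hb) /= oppr0.
by rewrite (_ : cR 0 = 0) ?scale0r.
Qed.

Lemma s11 : \sum_a s a *m 1%:M *m s a = (1 + 1 + 1)%:M.
Proof. rewrite sum3 s0 s1 s2 !mulmx1 /Hm !mul2 !add2 scal2 /cR; apply: eq2; csolve. Qed.

Lemma mainL (G Gi : 'M[R]_4) (t : 'cV[R]_4) (l : 'M[R]_(4,3)) (L : 'I_4 -> 'M[R[i]]_2)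
  (Cm : 'M[R[i]]_2) (D : 'I_4 -> 'M[R[i]]_2) (kap : 'I_4 -> 'I_4 -> R) :
 G^T = G -> G *m Gi = 1%:M -> t^T *m G *m t = 1%:M ->
 (forall n, L n = H (fun a => l n a)) ->
 (forall m n, L m *m L n + L n *m L m = (cR (2 * (t m 0 * t n 0 - Gi m n)))%:M) ->
 \tr Cm = 0 ->
 (forall n, D n - (Cm *m L n - L n *m Cm) = \sum_m cR (kap m n) *: L m) ->
 Cm = - (4%:R)^-1 *: (\sum_n D n *m (\sum_r cR (G n r) *: L r)
        - \sum_m \sum_n cR (\sum_r G n r * kap m r) *: (L m *m L n)).
Proof.
move=> hG hGi ht hL hcl hC hD.
have hll : l *m l^T = t *m t^T - Gi.
  apply/matrixP => m n.
  have := hcl m n; rewrite !hL anticomm => /(congr1 (fun A : 'M[R[i]]_2 => complex.Re (A 0 0))).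
  rewrite !mxE /= => e.
  rewrite sum3 big_ord1 !mxE.
  have h2 : (2 : R) != 0 by rewrite pnatr_eq0.
  by apply: (mulfI h2); exact: e.
have hM := real_part _ _ _ _ hG hGi ht hll.
have hGs : forall i j, G i j = G j i by move=> i j; rewrite -{1}hG mxE.
set Lw := fun n => \sum_r cR (G n r) *: L r.
have hW : \sum_n L n *m Lw n = - (1 + 1 + 1)%:M.
  by rewrite -s11 -(Ecomp _ _ _ _ hL hM); apply: eq_bigr => n _; rewrite mulmx1.
have hQ : \sum_n L n *m Cm *m Lw n = Cm by rewrite (Ecomp _ _ _ _ hL hM) sXs // opprK.
have hD' : forall n, D n = (Cm *m L n - L n *m Cm) + \sum_m cR (kap m n) *: L m.
  by move=> n; rewrite -hD addrC subrK.
have e1 : \sum_n D n *m Lw n = Cm *m (\sum_n L n *m Lw n) - \sum_n L n *m Cm *m Lw n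
     + \sum_n (\sum_m cR (kap m n) *: L m) *m Lw n.
  rewrite mulmx_sumr -sumrB -big_split; apply: eq_bigr => n _.
  by rewrite hD' mulmxDl mulmxBl !mulmxA.
have e2 : \sum_n (\sum_m cR (kap m n) *: L m) *m Lw n
      = \sum_m \sum_n cR (\sum_r G n r * kap m r) *: (L m *m L n).
  transitivity (\sum_n \sum_m \sum_r cR (kap m n * G n r) *: (L m *m L r)).
    apply: eq_bigr => n _; rewrite mulmx_suml; apply: eq_bigr => m _.
    rewrite -scalemxAl mulmx_sumr scaler_sumr; apply: eq_bigr => r _.
    by rewrite -scalemxAr scalerA !cRE rmorphM.
  rewrite exchange_big; apply: eq_bigr => m _.
  rewrite exchange_big; apply: eq_bigr => n _.
  rewrite cRE rmorph_sum scaler_suml; apply: eq_bigr => r _.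
  by rewrite hGs mulrC.
have h4 : (4%:R : R[i]) != 0 by rewrite pnatr_eq0.
rewrite e1 e2 hW hQ addrK mulmxN mul_mx_scalar.
rewrite -[Cm in _ - Cm]scale1r -scaleNr -scalerBl scalerA.
rewrite -{1}[Cm]scale1r; congr (_ *: _).
by field.
Qed.

Definition cv (A : 'M[R[i]]_2) (a : 'I_3) : R :=
  match nat_of_ord a with 0 => complex.Re (A 0 1) | 1 => - complex.Im (A 0 1) | _ => complex.Re (A 0 0) end.

Lemma Hcv (A : 'M[R[i]]_2) : complex.Im (A 0 0) = 0 -> A 1 0 = conjc (A 0 1) -> A 1 1 = - A 0 0 -> A = H (cv A).
Proof.
move=> h1 h2 h3; rewrite {1}[A]mk2E h2 h3 /H /Hm /cv /cR /=.
apply: eq2; apply: Ceq; rewrite ?(ReD,ImD,ReN,ImN,ReC,ImC,ReJ,ImJ) ?h1 ?opprK ?oppr0 //.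
Qed.

Lemma lin_imp {x y u v : R[i]} : x - y = v - u -> u = v -> x = y.
Proof. by move=> e huv; subst; rewrite subrr in e; apply/eqP; rewrite -subr_eq0 e. Qed.

Lemma mk2_inj a b c d a' b' c' d' : mk2 a b c d = mk2 a' b' c' d' ->
  [/\ a = a', b = b', c = c' & d = d'].
Proof.
move=> e; have f i j := congr1 (fun M : 'M[R[i]]_2 => M i j) e.
by move: (f 0 0) (f 0 1) (f 1 0) (f 1 1); rewrite !mxE /=.
Qed.

Lemma cliffL (A B : 'M[R[i]]_2) (a b c : R[i]) :
  (a%:M + A) *m (b%:M - B) + (b%:M + B) *m (a%:M - A) = c%:M ->
  A *m B + B *m A = (2 * a * b - c)%:M.
Proof.
rewrite [A]mk2E [B]mk2E !scal2 !opp2 !add2 !mul2 !add2 => /mk2_inj [h1 h2 h3 h4].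
apply: eq2.
- by apply: (lin_imp _ h1); ring.
- by apply: (lin_imp _ h2); ring.
- by apply: (lin_imp _ h3); ring.
- by apply: (lin_imp _ h4); ring.
Qed.

Lemma trBc (A B : 'M[R[i]]_2) : \tr (A - B) = \tr A - \tr B.
Proof. by rewrite /mxtrace -sumrB; apply: eq_bigr => i _; rewrite !mxE. Qed.

Lemma pimH (A : 'M[R[i]]_2) (tau : R) : herm2 A -> pip A = (cR tau)%:M -> pim A = H (cv (pim A)).
Proof.
move=> hh hp.
have htr : \tr (pim A) = 0.
  rewrite /pim trBc /pip mxtrace_scalar.
  have h2 : (2%:R : R[i]) != 0 by rewrite pnatr_eq0.
  by rewrite mulr2n; field.
have e : pim A = A - (cR tau)%:M by rewrite /pim hp.
have hA i j : conjc (A j i) = A i j.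
  by have := congr1 (fun M : 'M[R[i]]_2 => M i j) hh; rewrite !mxE.
move: htr; rewrite e [A]mk2E scal2 opp2 add2 tr2 => htr.
apply: Hcv; rewrite !mxE /=.
- rewrite ImD ImN /cR /= oppr0 addr0.
  have := congr1 (@complex.Im R) (hA 0 0); rewrite ImJ => h.
  lra.
- by rewrite !subr0 -hA.
- by apply/eqP; rewrite -addr_eq0 addrC htr.
Qed.

Lemma mink_sq : @Defs.minkowski R *m @Defs.minkowski R = 1%:M.
Proof.
rewrite /Defs.minkowski mul_diag_mx; apply/matrixP => i j; rewrite !mxE.
case: (i == j) => /=; last by rewrite !mulr0n mulr0.
by rewrite mulr1n; case: (i == 0); rewrite ?mulr1 ?mulrNN ?mulr1.
Qed.

Lemma ginvK (U : set 'rV[R]_4) (g : 'rV[R]_4 -> 'M[R]_4) (x : 'rV[R]_4) : lorentzian_on U g -> U x ->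
  g x *m ginv g x = 1%:M.
Proof.
move=> [_ hl] hx; have [_ [P [hP hPe]]] := hl x hx.
have hu : P^T *m g x *m P \in unitmx.
  case: hPe => ->.
    by case: (mulmx1_unit mink_sq).
  have : (- @Defs.minkowski R) *m (- @Defs.minkowski R) = 1%:M by rewrite mulmxN mulNmx opprK mink_sq.
  by case/mulmx1_unit.
rewrite /ginv mulmxV //.
by move: hu; rewrite !unitmx_mul => /andP [/andP [_ ->]].
Qed.

End Alg.

Local Open Scope classical_set_scope.

Theorem theorem2 (R : realType) (U : set (pt R)) (g : pt R -> 'M[R]_4)
  (tau : pt R -> 'I_4 -> R) (K : pt R -> 'I_4 -> 'M[R[i]]_2)
  (C : pt R -> 'I_4 -> 'M[R[i]]_2) (kappa : pt R -> 'I_4 -> 'I_4 -> 'I_4 -> R) :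
  open U ->
  lorentzian_on U g ->
  (* tau: smooth, unit *)
  (forall m, smooth_on U (fun x => tau x m)) ->
  (forall x, U x -> \sum_(m < 4) \sum_(n < 4) g x m n * tau x m * tau x n = 1) ->
  (* K: smooth, Herm(2)-valued, Clifford relation, divergence-free trace part *)
  (forall n, smoothM_on U (fun x => K x n)) ->
  (forall x n, U x -> herm2 (K x n)) ->
  (forall x m n, U x ->
     K x m *m tildeM (K x n) + K x n *m tildeM (K x m)
     = (cR (2%:R * ginv g x m n))%:M) ->
  (forall x, U x -> divM g (fun y m => pip (K y m)) x = 0) ->
  (forall x n, U x -> pip (K x n) = (cR (tau x n))%:M) ->
  (* C: smooth, su(2)-valued *)
  (forall l, smoothM_on U (fun x => C x l)) ->
  (forall x l, U x -> su2_mat (C x l)) ->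
  (* kappa: smooth real tensor kappa_{lam mu}^nu, traceless, antisymmetric *)
  (forall l m n, smooth_on U (fun x => kappa x l m n)) ->
  (forall x m, U x -> \sum_(l < 4) kappa x l m l = 0) ->
  (forall x l m n, U x ->
     \sum_(r < 4) g x n r * kappa x l m r = - \sum_(r < 4) g x m r * kappa x l n r) ->
  (* the equation, with L^nu = pi_-(K^nu) *)
  (forall x l n, U x ->
     covM g (fun y m => pim (K y m)) x l n
       - (C x l *m pim (K x n) - pim (K x n) *m C x l)
     = \sum_(m < 4) cR (kappa x l m n) *: pim (K x m)) ->
  forall x l, U x ->
    C x l = - (4%:R)^-1 *:
      (\sum_(n < 4) covM g (fun y m => pim (K y m)) x l n
                      *m (\sum_(r < 4) cR (g x n r) *: pim (K x r))
       - \sum_(m < 4) \sum_(n < 4)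
           cR (\sum_(r < 4) g x n r * kappa x l m r) *: (pim (K x m) *m pim (K x n))).
Proof.
move=> hU hlor htau htau1 hKs hherm hcl hdiv hpip hCs hsu hks hktr hkanti heq x l hx.
set lm := \matrix_(n < 4, a < 3) @cv R (pim (K x n)) a.
apply: (@mainL R (g x) (ginv g x) (\col_(i < 4) tau x i) lm
  (fun n => pim (K x n)) (C x l)
  (fun n => covM g (fun y m => pim (K y m)) x l n) (fun m r => kappa x l m r)).
- by case: hlor => _ h; case: (h x hx).
- exact: (@ginvK R U g x hlor hx).
- apply/matrixP => i j; rewrite !ord1 !mxE.
  rewrite eqxx mulr1n -(htau1 x hx).
  transitivity (\sum_n \sum_m g x m n * tau x m * tau x n); last by rewrite exchange_big.
  apply: eq_bigr => n _; rewrite !mxE big_distrl /=; apply: eq_bigr => m _; rewrite !mxE; ring.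
- move=> n /=; rewrite {1}(@pimH R _ _ (hherm x n hx) (hpip x n hx)).
  by rewrite /H /lm !mxE.
- move=> m n /=.
  have h := hcl x m n hx; rewrite /tildeM in h.
  set Lm := pim (K x m) in h *; set Ln := pim (K x n) in h *.
  rewrite !hpip // in h.
  have eK k : K x k = (cR (tau x k))%:M + pim (K x k) by rewrite -hpip // /pim addrC subrK.
  rewrite (eK m) (eK n) in h.
  rewrite (@cliffL R _ _ _ _ _ h) !mxE; congr (_%:M).
  rewrite !cRE !rmorphM !rmorphB !rmorphM /= !rmorph_nat; ring.
- by case: (hsu x l hx).
- by move=> n /=; rewrite heq.
Qed.
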